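(* In the absence of the UAV speed constraint (i.e. allowing arbitrary measurable trajectories $x:[0,T]\to\mathbb{R}$), for any $T>0$ the capacity region of the UAV-enabled two-user broadcast channel is $$\hat{\mathcal{C}}(\bar P)=\left\{(r_1,r_2): r_1+r_2\le\log_2\left(1+\frac{\bar P\beta_0}{H^2}\right),\ r_1\ge0,\ r_2\ge0\right\}.$$
   Context: Fix $D>0$, $H>0$, $\beta_0>0$, $\bar P>0$. Ground users GU 1, GU 2 are at horizontal positions $x_1=-D/2$, $x_2=D/2$; for UAV position $x\in\mathbb{R}$ (constant altitude $H$), $h_k(x)=\beta_0/((x-x_k)^2+H^2)$. A power allocation is a pair of measurable functions $p_1,p_2:[0,T]\to[0,\infty)$ with $p_1(t)+p_2(t)\le\bar P$. $\mathcal{C}(x,p)$ is the set of $(r_1,r_2)$, $r_1,r_2\ge0$, with $r_1\le\frac1T\int_0^T\log_2(1+p_1(t)h_1(x(t)))dt$, $r_2\le\frac1T\int_0^T\log_2(1+p_2(t)h_2(x(t)))dt$, $r_1+r_2\le\frac1T\int_0^T\log_2(1+p_1(t)h_1(x(t))+p_2(t)h_2(x(t)))dt$. The capacity region here is the union of $\mathcal{C}(x,p)$ over all such $x$ and $p$. *)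

(* Defs.v *)
From HB Require Import structures.
From mathcomp Require Import all_boot all_order all_algebra.
From mathcomp Require Import all_classical all_reals all_analysis.
Set Implicit Arguments. Unset Strict Implicit. Unset Printing Implicit Defensive.
Import Order.TTheory GRing.Theory Num.Theory.
Local Open Scope classical_set_scope.
Local Open Scope ring_scope.

Section Defs.
Variable R : realType.

Definition log2 (y : R) : R := ln y / ln 2.

Definition gain (beta0 H xk x : R) : R := beta0 / ((x - xk) ^+ 2 + H ^+ 2).

Definition avg_int (T : R) (f : R -> R) : \bar R :=
  let I := `[0, T]%classic in
  ((T^-1)%:E * \int[lebesgue_measure]_(t in I) (f t)%:E)%E.

Definition power_alloc (Pbar T : R) (p1 p2 : R -> R) : Prop :=
  measurable_fun `[0, T]%classic p1 /\ measurable_fun `[0, T]%classic p2 /\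
  (forall t, 0 <= t <= T -> 0 <= p1 t /\ 0 <= p2 t /\ p1 t + p2 t <= Pbar).

Definition rate_region (D H beta0 T : R) (x p1 p2 : R -> R) : set (R * R) :=
  [set r | 0 <= r.1 /\ 0 <= r.2 /\
    (r.1%:E <= avg_int T (fun t => log2 (1 + p1 t * gain beta0 H (- D / 2) (x t))))%E /\
    (r.2%:E <= avg_int T (fun t => log2 (1 + p2 t * gain beta0 H (D / 2) (x t))))%E /\
    ((r.1 + r.2)%:E <= avg_int T (fun t => log2 (1 + p1 t * gain beta0 H (- D / 2) (x t)
                                                  + p2 t * gain beta0 H (D / 2) (x t))))%E].

Definition capacity_region (D H beta0 Pbar T : R) : set (R * R) :=
  [set r | exists x p1 p2 : R -> R,
    measurable_fun `[0, T]%classic x /\ power_alloc Pbar T p1 p2 /\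
    rate_region D H beta0 T x p1 p2 r].

End Defs.

(* Main.v *)
Require Import Defs.
From HB Require Import structures.
From mathcomp Require Import all_boot all_order all_algebra.
From mathcomp Require Import all_classical all_reals all_analysis.
From mathcomp Require Import ring lra measurable_realfun.
Import Order.TTheory GRing.Theory Num.Theory.
Import numFieldNormedType.Exports.
Local Open Scope classical_set_scope.
Local Open Scope ring_scope.

Section S.
Variable R : realType.

Lemma gain_cont (beta0 H xk : R) : 0 < H -> continuous (gain beta0 H xk : R -> R).
Proof.
move=> H0 y; rewrite /gain.
apply: cvgM; first exact: cvg_cst.
apply: cvgV.
  by apply: lt0r_neq0; apply: ltr_wpDl; [exact: sqr_ge0| exact: exprn_gt0].
apply: cvgD; last exact: cvg_cst.
by rewrite expr2; apply: cvgM; apply: cvgB; (exact: cvg_id || exact: cvg_cst).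
Qed.

Lemma log2_meas (Dm : set R) (f : R -> R) : measurable Dm -> measurable_fun Dm f ->
  measurable_fun Dm (fun t => log2 (f t)).
Proof.
move=> mD mf; rewrite /log2.
exact: (measurable_realfun.measurable_funM (measurableT_comp (@measurable_realfun.measurable_ln R) mf) (measurable_cst (ln 2)^-1)).
Qed.

Lemma gain_le (beta0 H xk y : R) : 0 < H -> 0 < beta0 ->
  0 <= gain beta0 H xk y <= beta0 / H ^+ 2.
Proof.
move=> H0 b0; rewrite /gain.
have h2 : 0 < H ^+ 2 by exact: exprn_gt0.
have hd : 0 < (y - xk) ^+ 2 + H ^+ 2 by apply: ltr_wpDl; [exact: sqr_ge0|].
apply/andP; split; first by apply: divr_ge0; apply: ltW.
apply: ler_wpM2l; first exact: ltW.
by rewrite lef_pV2 ?posrE // lerDr sqr_ge0.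
Qed.

Lemma gain_self (beta0 H xk : R) : gain beta0 H xk xk = beta0 / H ^+ 2.
Proof. by rewrite /gain subrr expr0n /= add0r. Qed.

Lemma log2_le (a b : R) : 0 < a -> a <= b -> log2 a <= log2 b.
Proof.
move=> a0 ab; rewrite /log2; apply: ler_wpM2r.
  by rewrite invr_ge0 ln_ge0 // ler1n.
by rewrite ler_ln ?posrE // (lt_le_trans a0).
Qed.

Lemma log2_ge0 (a : R) : 1 <= a -> 0 <= log2 a.
Proof.
move=> a1; rewrite /log2; apply: divr_ge0; first exact: ln_ge0.
by rewrite ln_ge0 // ler1n.
Qed.

Lemma log2_gt0 (a : R) : 1 < a -> 0 < log2 a.
Proof.
move=> a1; rewrite /log2; apply: divr_gt0; first exact: ln_gt0.
by rewrite ln_gt0 // ltr1n.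
Qed.

Lemma log2_1 : log2 (1 : R) = 0.
Proof. by rewrite /log2 ln1 mul0r. Qed.

Lemma integrand_meas (H beta0 T a b : R) (x p1 p2 : R -> R) : 0 < H ->
  measurable_fun `[0, T]%classic x -> measurable_fun `[0, T]%classic p1 ->
  measurable_fun `[0, T]%classic p2 ->
  measurable_fun `[0, T]%classic (EFin \o (fun t : R => log2 (1 + p1 t * gain beta0 H a (x t)
     + p2 t * gain beta0 H b (x t)))).
Proof.
move=> H0 mx mp1 mp2.
apply/measurable_realfun.measurable_EFinP.
apply: log2_meas => //.
have mg : forall c, measurable_fun `[0, T]%classic (fun t => gain beta0 H c (x t)).
  move=> c; exact: (measurableT_comp (continuous_measurable_fun (gain_cont beta0 H c H0)) mx).
apply: measurable_realfun.measurable_funD.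
  apply: measurable_realfun.measurable_funD; first exact: measurable_cst.
  exact: measurable_realfun.measurable_funM.
exact: measurable_realfun.measurable_funM.
Qed.

Lemma int_cst_itv (c a b : R) : a <= b ->
  (\int[lebesgue_measure]_(t in `[a, b]%classic) (cst c%:E) t = (c * (b - a))%:E)%E.
Proof.
move=> ab; rewrite integral_cst//= lebesgue_measure_itv/= lte_fin.
case: ltP => [_|ba]; first by rewrite -EFinD -EFinM.
have -> : b = a by apply/eqP; rewrite eq_le ab ba.
by rewrite subrr mulr0 mule0.
Qed.


Lemma avg_indicB (c s T : R) (f : R -> R) : 0 <= c -> 0 < T -> 0 <= s <= T ->
  (forall t, f t = c * \1_(`]-oo, s[%classic) t) -> avg_int T f = (T^-1 * (c * s))%:E.
Proof.
move=> c0 T0 /andP[s0 sT] hf.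
have -> : f = (fun t => c * \1_(`]-oo, s[%classic) t) by apply/funext => t; exact: hf.
rewrite /avg_int.
have := @integralZl_indic _ _ _ lebesgue_measure _ (measurable_itv `[0, T]) (fun=> `]-oo, s[%classic) c.
move=> /= ->; last exact: measurable_itv; last by move=> /(le_lt_trans c0); rewrite ltxx.
rewrite (@integral_indic _ _ _ lebesgue_measure _ (measurable_itv `[0, T]) _ (measurable_itv `]-oo, s[)).
have -> : (`]-oo, s[%classic `&` `[0, T]%classic) = `[0, s[%classic :> set R.
  apply/seteqP; split => t /=; rewrite !in_itv /=.
    by case=> ts /andP[t0 tT]; rewrite t0 ts.
  by case/andP=> t0 ts; rewrite ts t0 /=; split => //; exact: ltW (lt_le_trans ts sT).
rewrite /= lebesgue_measure_itv; simpl.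
case: ltP => [_|]; first by rewrite oppr0 adde0 -!EFinM.
rewrite lee_fin => ss.
have -> : s = 0 by apply/eqP; rewrite eq_le ss s0.
by rewrite !mulr0 !mule0.
Qed.

Lemma avg_indicA (c s T : R) (f : R -> R) : 0 <= c -> 0 < T -> 0 <= s <= T ->
  (forall t, f t = c * \1_(`[s, +oo[%classic) t) -> avg_int T f = (T^-1 * (c * (T - s)))%:E.
Proof.
move=> c0 T0 /andP[s0 sT] hf.
have -> : f = (fun t => c * \1_(`[s, +oo[%classic) t) by apply/funext => t; exact: hf.
rewrite /avg_int.
have := @integralZl_indic _ _ _ lebesgue_measure _ (measurable_itv `[0, T]) (fun=> `[s, +oo[%classic) c.
move=> /= ->; last exact: measurable_itv; last by move=> /(le_lt_trans c0); rewrite ltxx.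
rewrite (@integral_indic _ _ _ lebesgue_measure _ (measurable_itv `[0, T]) _ (measurable_itv `[s, +oo[)).
have -> : (`[s, +oo[%classic `&` `[0, T]%classic) = `[s, T]%classic :> set R.
  apply/seteqP; split => t /=; rewrite !in_itv /=.
    by case=> /andP[st _] /andP[t0 tT]; rewrite st tT.
  by case/andP=> st tT; rewrite st tT (le_trans s0 st) /=.
rewrite /= lebesgue_measure_itv; simpl.
case: ltP => [_|]; first by rewrite -!EFinM.
rewrite lee_fin => ss.
have -> : s = T by apply/eqP; rewrite eq_le ss sT.
by rewrite subrr !mulr0 !mule0.
Qed.

Lemma avg_cst (c T : R) (f : R -> R) : 0 < T -> (forall t, f t = c) -> avg_int T f = c%:E.
Proof.
move=> T0 hf.
have -> : f = (fun t => c) by apply/funext => t; exact: hf.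
rewrite /avg_int.
have := int_cst_itv c 0 T (ltW T0); rewrite /= => ->.
by rewrite -EFinM subr0 mulrCA mulVf ?mulr1 // gt_eqF.
Qed.
End S.

Theorem proposition1 (R : realType) (D H beta0 Pbar T : R) :
  0 < D -> 0 < H -> 0 < beta0 -> 0 < Pbar -> 0 < T ->
  capacity_region D H beta0 Pbar T =
  [set r : R * R | r.1 + r.2 <= log2 (1 + Pbar * beta0 / H ^+ 2) /\
                   0 <= r.1 /\ 0 <= r.2].
Proof.
move=> D0 H0 b0 P0 T0.
set g0 := beta0 / H ^+ 2.
have g00 : 0 < g0 by apply: divr_gt0 => //; exact: exprn_gt0.
have -> : Pbar * beta0 / H ^+ 2 = Pbar * g0 by rewrite /g0 mulrA.
set C := log2 (1 + Pbar * g0).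
have C0 : 0 < C by apply: log2_gt0; rewrite ltrDl mulr_gt0.
have mI : measurable (`[0, T]%classic : set R) by exact: measurable_itv.
apply/seteqP; split => -[r1 r2] /=.
- case=> x [p1 [p2 [mx [[mp1 [mp2 hp]] [r10 [r20 [_ [_ hs]]]]]]]].
  split => //.
  rewrite -lee_fin (le_trans hs) //.
  have key : forall t, `[0%R, T]%classic t ->
      (0 <= log2 (1 + p1 t * gain beta0 H (- D / 2) (x t) + p2 t * gain beta0 H (D / 2) (x t)) <= C)%R.
    move=> t; rewrite /= in_itv /= => tI.
    have [h1 [h2 h12]] := hp t tI.
    have /andP[g1a g1b] := gain_le _ beta0 H (- D / 2) (x t) H0 b0.
    have /andP[g2a g2b] := gain_le _ beta0 H (D / 2) (x t) H0 b0.
    rewrite -/g0 in g1b g2b.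
    have q1 := mulr_ge0 h1 g1a; have q2 := mulr_ge0 h2 g2a.
    have e1 := ler_wpM2l h1 g1b; have e2 := ler_wpM2l h2 g2b.
    have e3 := ler_wpM2r (ltW g00) h12.
    rewrite mulrDl in e3.
    apply/andP; split; first by apply: log2_ge0; lra.
    by apply: log2_le; lra.
  have hI : (\int[lebesgue_measure]_(t in `[0%R, T]%classic)
      (log2 (1 + p1 t * gain beta0 H (- D / 2) (x t) + p2 t * gain beta0 H (D / 2) (x t)))%:E
      <= \int[lebesgue_measure]_(t in `[0%R, T]%classic) (cst C%:E) t)%E.
    apply: ge0_le_integral => //.
    + by move=> t /key /andP[]; rewrite lee_fin.
    + exact: integrand_meas.
    + by move=> t /key /andP[_]; rewrite lee_fin.
  rewrite /avg_int.
  rewrite int_cst_itv ?(ltW T0) // subr0 in hI.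
  apply: (le_trans (lee_wpmul2l _ hI)); first by rewrite lee_fin invr_ge0 ltW.
  by rewrite -EFinM lee_fin mulrCA mulVf ?mulr1 // gt_eqF.
- case=> hs [r10 r20].
  set s := r1 / C * T.
  have s0 : 0 <= s by apply: mulr_ge0; [apply: divr_ge0 =>//; exact: ltW| exact: ltW].
  have sT : s <= T.
    rewrite /s -[leRHS]mul1r; apply: ler_wpM2r; first exact: ltW.
    rewrite ler_pdivrMr // mul1r; lra.
  set A := (`[s, +oo[%classic : set R).
  set B := (`]-oo, s[%classic : set R).
  have hBm : forall t, (t \in B) = (t < s) by move=> t; rewrite /B mem_setE in_itv.
  have hAm : forall t, (t \in A) = (s <= t) by move=> t; rewrite /A mem_setE in_itv /= andbT.
  have mA : measurable A by exact: measurable_itv.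
  have mB : measurable B by exact: measurable_itv.
  exists (fun t => - D / 2 + D * \1_A t), (fun t => Pbar * \1_B t), (fun t => Pbar * \1_A t).
  split.
    apply: measurable_funD; first exact: measurable_cst.
    by apply: measurable_funM; [exact: measurable_cst|exact: measurable_indic].
  split.
    split.
      by apply: measurable_funM; [exact: measurable_cst|exact: measurable_indic].
    split.
      by apply: measurable_funM; [exact: measurable_cst|exact: measurable_indic].
    move=> t _; rewrite !indicE. rewrite (hBm t) (hAm t); case: ltP => _ /=; rewrite !mulr1 !mulr0; lra.
  have xB : - D / 2 + D * 0 = - D / 2 by rewrite mulr0 addr0.
  have xA : - D / 2 + D * 1 = D / 2 by rewrite mulr1; field.
  split => //; split => //; split; last split.
  - have h1 : forall t, log2 (1 + Pbar * \1_B t * gain beta0 H (- D / 2) (- D / 2 + D * \1_A t))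
        = C * \1_B t.
      move=> t; rewrite !indicE ?(hBm t) ?(hAm t); case: ltP => _ /=.
        by rewrite xB !mulr1 gain_self.
      by rewrite xA !mulr0 mul0r addr0 log2_1.
    rewrite (@avg_indicB _ C s T _ (ltW C0) T0 _ h1); last by rewrite s0 sT.
    rewrite lee_fin /s.
    have -> : T^-1 * (C * (r1 / C * T)) = r1 by field; rewrite ?gt_eqF.
    exact: lexx.
  - have h2 : forall t, log2 (1 + Pbar * \1_A t * gain beta0 H (D / 2) (- D / 2 + D * \1_A t))
        = C * \1_A t.
      move=> t; rewrite !indicE ?(hBm t) ?(hAm t); case: ltP => _ /=.
        by rewrite xB !mulr0 mul0r addr0 log2_1.
      by rewrite xA !mulr1 gain_self.
    rewrite (@avg_indicA _ C s T _ (ltW C0) T0 _ h2); last by rewrite s0 sT.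
    rewrite lee_fin /s.
    have -> : T^-1 * (C * (T - r1 / C * T)) = C - r1 by field; rewrite ?gt_eqF.
    rewrite /=; lra.
  - have h3 : forall t, log2 (1 + Pbar * \1_B t * gain beta0 H (- D / 2) (- D / 2 + D * \1_A t)
        + Pbar * \1_A t * gain beta0 H (D / 2) (- D / 2 + D * \1_A t)) = C.
      move=> t; rewrite !indicE ?(hBm t) ?(hAm t); case: ltP => _ /=.
        by rewrite xB !mulr1 !mulr0 mul0r addr0 gain_self.
      by rewrite xA !mulr1 mulr0 mul0r addr0 gain_self.
    by rewrite (@avg_cst _ C T _ T0 h3) lee_fin.
Qed.
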